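(* Let $(B,\le)=(V,E,\le)$ be a properly ordered Bratteli diagram with Bratteli–Vershik system $(X_B,T_B)$. For $k\ge1$ let $\Sigma_k$ be the finite set of paths from $v^0$ to vertices of $V_k$, let $\pi_k:X_B\to\Sigma_k$ be the map restricting an infinite path to its first $k$ edges, let $Y_k=\{(\pi_k(T_B^n x))_{n\in\mathbb Z}:x\in X_B\}\subseteq\Sigma_k^{\mathbb Z}$, and let $S_k$ be the left shift on $Y_k$. Then $(X_B,T_B)$ is weakly mixing if and only if $(Y_k,S_k)$ is weakly mixing for every $k\ge1$.
   Context: Bratteli diagram: levels $V_0=\{v^0\},V_1,\dots$ (finite), edges $E_k$ from $V_{k-1}$ to $V_k$. An ordering linearly orders each set of edges with a common range; $X_B$ is the space of infinite paths from $v^0$ with the cylinder topology. Properly ordered: the diagram is simple and there are unique all-maximal and all-minimal infinite paths. The Vershik map $T_B$ sends the maximal path to the minimal one and otherwise replaces the first non-maximal edge by its successor and the preceding edges by the minimal path to the successor's source. A system $(Y,S)$ is weakly mixing if $(Y\times Y,S\times S)$ is topologically transitive. *)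

(* Defs.v *)
From mathcomp Require Import all_boot all_order all_algebra.
Set Implicit Arguments. Unset Strict Implicit. Unset Printing Implicit Defensive.
Import GRing.Theory Num.Theory.

(* A Bratteli diagram.  Level n vertices: V n (V 0 = {v^0}).
   Edges E n go from V n to V n.+1, i.e. E n is the paper's E_{n+1}. *)
Record bratteli := Bratteli {
  V : nat -> finType;
  E : nat -> finType;
  src : forall n, E n -> V n;
  rng : forall n, E n -> V n.+1 }.

Section Bratteli.
Variable B : bratteli.

Definition is_bratteli : Prop :=
  #|V B 0| = 1%N /\
  (forall n (v : V B n), exists e : E B n, src e = v) /\
  (forall n (v : V B n.+1), exists e : E B n, rng e = v).

Local Unset Implicit Arguments.
Fixpoint reach (m d : nat) : V B m -> V B (d + m)%coq_nat -> Prop :=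
  match d return V B m -> V B (d + m)%coq_nat -> Prop with
  | 0 => fun v w => v = w
  | d'.+1 => fun v w => exists e : E B (d' + m)%coq_nat,
                 rng e = w /\ reach m d' v (src e)
  end.

Local Set Implicit Arguments.
Definition simple : Prop :=
  exists m : nat -> nat, m 0 = 0%N /\ (forall j, (m j < m j.+1)%N) /\
    forall j d, m j.+1 = (d + m j)%coq_nat ->
      forall (v : V B (m j)) (w : V B (d + m j)%coq_nat), reach (m j) d v w.

Definition is_ordering (ord : forall n, rel (E B n)) : Prop :=
  forall n,
    (forall e f : E B n, ord n e f -> rng e = rng f) /\
    (forall e : E B n, ~~ ord n e e) /\
    (forall e f g : E B n, ord n e f -> ord n f g -> ord n e g) /\
    (forall e f : E B n, rng e = rng f -> e <> f -> ord n e f \/ ord n f e).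

(* infinite paths from v^0 *)
Definition bpath := {x : forall n, E B n | forall n, rng (x n) = src (x n.+1)}.

Definition pv (x : bpath) : forall n, E B n := proj1_sig x.

Variable ord : forall n : nat, rel (E B n).
Arguments ord : clear implicits.

Definition maximal n (e : E B n) : Prop := forall f, ~~ ord n e f.
Definition minimal n (e : E B n) : Prop := forall f, ~~ ord n f e.
Definition succ_edge n (e f : E B n) : Prop :=
  ord n e f /\ forall g, ~ (ord n e g /\ ord n g f).

Definition is_max_path (x : bpath) : Prop := forall n, maximal (pv x n).
Definition is_min_path (x : bpath) : Prop := forall n, minimal (pv x n).

Definition properly_ordered : Prop :=
  simple /\ (exists! x : bpath, is_max_path x) /\ (exists! x : bpath, is_min_path x).

Definition vershik (T : bpath -> bpath) : Prop :=
  forall x : bpath,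
    (is_max_path x -> is_min_path (T x)) /\
    (forall k, ~ maximal (pv x k) -> (forall i, (i < k)%N -> maximal (pv x i)) ->
       succ_edge (pv x k) (pv (T x) k) /\
       (forall i, (i < k)%N -> minimal (pv (T x) i)) /\
       (forall i, (k < i)%N -> pv (T x) i = pv x i)).

Definition cyl_near (k : nat) (x y : bpath) : Prop :=
  forall i, (i < k)%N -> pv x i = pv y i.

(* symbols of Sigma_k, encoded as the bpath truncated after k edges *)
Definition sym := forall n, option (E B n).
Definition pik (k : nat) (x : bpath) : sym :=
  fun n => if (n < k)%N then Some (pv x n) else None.

End Bratteli.

Definition iterz {A : Type} (f g : A -> A) (z : int) : A -> A :=
  match z with
  | Posz m => iter m f
  | Negz m => iter m.+1 g
  end.

(* Topology given by a nested family of basic neighbourhoods near k a,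
   on the subspace of points satisfying P.  Opens of the product space. *)
Definition prod_open {A : Type} (P : A -> Prop) (near : nat -> A -> A -> Prop)
  (W : A * A -> Prop) : Prop :=
  (forall p, W p -> P p.1 /\ P p.2) /\
  forall p, W p -> exists k1 k2, forall q, P q.1 -> P q.2 ->
      near k1 p.1 q.1 -> near k2 p.2 q.2 -> W q.

(* weak mixing: (Y x Y, f x f) topologically transitive, i.e. for all
   nonempty open W1 W2 there is n in Z with (f x f)^n(W1) meeting W2 *)
Definition weakly_mixing {A : Type} (P : A -> Prop) (near : nat -> A -> A -> Prop)
  (f g : A -> A) : Prop :=
  forall W1 W2, prod_open P near W1 -> prod_open P near W2 ->
    (exists p, W1 p) -> (exists p, W2 p) ->
    exists (n : int) (p : A * A), W1 p /\ W2 (iterz f g n p.1, iterz f g n p.2).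

Definition Ycode (B : bratteli) (T Tinv : bpath B -> bpath B) (k : nat)
  (x : bpath B) : int -> sym B :=
  fun z => pik k (iterz T Tinv z x).
Definition inY (B : bratteli) (T Tinv : bpath B -> bpath B) (k : nat)
  (w : int -> sym B) : Prop := exists x, w = Ycode T Tinv k x.
Definition seq_near (B : bratteli) (N : nat) (w w' : int -> sym B) : Prop :=
  forall z : int, (absz z <= N)%N -> w z = w' z.
Definition shiftL (B : bratteli) (w : int -> sym B) : int -> sym B :=
  fun z => w (z + 1)%R.
Definition shiftR (B : bratteli) (w : int -> sym B) : int -> sym B :=
  fun z => w (z - 1)%R.

(* Main.v *)
Require Import Defs.
From mathcomp Require Import all_boot all_order all_algebra zify.
From Stdlib Require Import Classical ClassicalEpsilon FunctionalExtensionality.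
Import GRing.Theory.

Lemma pvP (B : bratteli) (x : bpath B) n : rng (pv x n) = src (pv x n.+1).
Proof. exact: (proj2_sig x n). Qed.

Lemma cyl_mono (B : bratteli) k K (x y : bpath B) : (k <= K)%N -> cyl_near K x y -> cyl_near k x y.
Proof. move=> hk h i hi; apply: h; exact: leq_trans hi hk. Qed.

Lemma cyl_sym (B : bratteli) k (x y : bpath B) : cyl_near k x y -> cyl_near k y x.
Proof. by move=> h i hi; rewrite h. Qed.

Lemma cyl_trans (B : bratteli) k (x y z : bpath B) : cyl_near k x y -> cyl_near k y z -> cyl_near k x z.
Proof. by move=> h1 h2 i hi; rewrite h1 // h2. Qed.

Lemma cyl_pik (B : bratteli) k (x y : bpath B) : cyl_near k x y -> pik k x = pik k y.
Proof.
move=> h; apply: functional_extensionality_dep => n; rewrite /pik.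
by case: ifP => // hn; rewrite h.
Qed.

Lemma pik_cyl (B : bratteli) k (x y : bpath B) : pik k x = pik k y -> cyl_near k x y.
Proof.
move=> h i hi; have := congr1 (fun s => s i) h; rewrite /pik hi; by case.
Qed.

Section Build.
Variable B : bratteli.
Variable R : forall n, E B n -> Prop.
Hypothesis h0 : exists f, R 0 f.
Hypothesis hs : forall n f, R n f -> exists g, R n.+1 g /\ src g = rng f.

Fixpoint bld n : {f : E B n | R n f} :=
  match n return {f : E B n | R n f} with
  | 0 => constructive_indefinite_description _ h0
  | n'.+1 => let s := bld n' in
     let t := constructive_indefinite_description _ (hs _ _ (proj2_sig s)) in
     exist _ (proj1_sig t) (proj1 (proj2_sig t))
  end.

Lemma build_path : exists y : bpath B, forall n, R n (pv y n).
Proof.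
have P : forall n, rng (proj1_sig (bld n)) = src (proj1_sig (bld n.+1)).
  move=> n /=; set t := constructive_indefinite_description _ _.
  by rewrite (proj2 (proj2_sig t)).
exists (exist _ (fun n => proj1_sig (bld n)) P) => n.
exact: (proj2_sig (bld n)).
Qed.
End Build.

Section Compact.
Variable B : bratteli.
Variable Q : forall n, E B n -> Prop.
Arguments Q {n} _.
Variable x0 : bpath B.
Hypothesis Qx0 : forall n, Q (pv x0 n).
Hypothesis Quniq : forall y : bpath B, (forall n, Q (pv y n)) -> y = x0.

Definition firstQ K (y : bpath B) := forall i, (i < K)%N -> Q (pv y i).
Definition Tst m (e : E B m) := forall K, exists y, firstQ K y /\ pv y m = e.
Arguments Tst {m} e.

Lemma firstQ_mono K K' y : (K <= K')%N -> firstQ K' y -> firstQ K y.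
Proof. move=> hk h i hi; apply: h; exact: leq_trans hi hk. Qed.

Lemma Tst_step n (f : E B n) : Tst f -> exists g : E B n.+1, Tst g /\ src g = rng f.
Proof.
move=> hf; apply: NNPP => H.
have H' : forall g : E B n.+1, exists K, src g = rng f -> forall y, firstQ K y -> pv y n.+1 <> g.
  move=> g; case: (classic (src g = rng f)) => hg; last by exists 0%N.
  apply: NNPP => Hn; apply: H; exists g; split => // K.
  apply: NNPP => HK; apply: Hn; exists K => _ y hy he; apply: HK; by exists y.
pose Kf g := proj1_sig (constructive_indefinite_description _ (H' g)).
have HKf : forall g, src g = rng f -> forall y, firstQ (Kf g) y -> pv y n.+1 <> g.
  move=> g; exact: (proj2_sig (constructive_indefinite_description _ (H' g))).
pose Km := (\max_(g : E B n.+1) Kf g)%N.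
have [y [hy hyf]] := hf Km.
apply: (HKf (pv y n.+1) _ y _ erefl).
  by rewrite -pvP hyf.
apply: firstQ_mono hy; exact: (@leq_bigmax _ (fun g => Kf g)).
Qed.

Lemma Tst_x0 m (e : E B m) : Tst e -> e = pv x0 m.
Proof.
move=> he; have [y0 [hy0 hy0e]] := he m.+1.
subst e.
have tr : forall a b (h : a = b), Tst (pv y0 a) -> Tst (pv y0 b) by move=> a b ->.
pose R n (f : E B n) := ((n <= m)%N -> f = pv y0 n) /\ ((m <= n)%N -> Tst f).
have [z hz] : exists z : bpath B, forall n, R n (pv z n).
  apply: build_path.
    exists (pv y0 0); split => // hm; apply: (tr m); last by [].
    by apply/eqP; rewrite eqn_leq hm.
  move=> n f [h1 h2]; case: (ltnP n m) => hnm.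
    exists (pv y0 n.+1); split; last by rewrite -pvP h1 // ltnW.
    split => // hm; apply: (tr m) => //; by apply/eqP; rewrite eqn_leq hm hnm.
  have [g [hg1 hg2]] := Tst_step _ _ (h2 hnm).
  exists g; split => //; split => // hm.
  by move: (leq_trans hm hnm); rewrite ltnn.
have zQ : forall n, Q (pv z n).
  move=> n; case: (ltnP n m) => hnm.
    rewrite (proj1 (hz n)) ?(ltnW hnm) //; apply: hy0; exact: ltnW.
  have [y [hy hyz]] := (proj2 (hz n)) hnm n.+1.
  by rewrite -hyz; apply: hy.
have ezx := Quniq _ zQ.
by rewrite -ezx (proj1 (hz m)).
Qed.

Lemma level_conv m : exists K, forall y, firstQ K y -> pv y m = pv x0 m.
Proof.
have H' : forall e : E B m, exists K, e <> pv x0 m -> forall y, firstQ K y -> pv y m <> e.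
  move=> e; case: (eqVneq e (pv x0 m)) => [->|ne]; first by exists 0%N.
  have nT : ~ Tst e by move/Tst_x0 => h; move/eqP: ne.
  apply: NNPP => Hn; apply: nT => K.
  apply: NNPP => HK; apply: Hn; exists K => _ y hy he; apply: HK; by exists y.
pose Kf g := proj1_sig (constructive_indefinite_description _ (H' g)).
have HKf : forall g, g <> pv x0 m -> forall y, firstQ (Kf g) y -> pv y m <> g.
  move=> g; exact: (proj2_sig (constructive_indefinite_description _ (H' g))).
exists (\max_(g : E B m) Kf g)%N => y hy.
case: (eqVneq (pv y m) (pv x0 m)) => [//|ne].
exfalso; apply: (HKf (pv y m) _ y _ erefl); first by apply/eqP.
apply: firstQ_mono hy; exact: (@leq_bigmax _ (fun g => Kf g)).
Qed.

Lemma conv k : exists K, forall y, firstQ K y -> cyl_near k y x0.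
Proof.
elim: k => [|k [K1 IH]]; first by exists 0%N => y _ i.
have [K2 h2] := level_conv k.
exists (maxn K1 K2) => y hy i; rewrite ltnS leq_eqVlt => /orP [/eqP ->|hi].
  by apply: h2; apply: firstQ_mono hy; rewrite leq_maxr.
by apply: (IH y) => //; apply: firstQ_mono hy; rewrite leq_maxl.
Qed.
End Compact.
Section Ord.
Variable B : bratteli.
Variable ord : forall n, rel (E B n).
Hypothesis Hord : is_ordering ord.

Lemma max_uniq n (e f : E B n) : maximal ord e -> maximal ord f -> rng e = rng f -> e = f.
Proof.
move=> he hf hr; case: (eqVneq e f) => // /eqP ne.
have [_ [_ [_ tot]]] := Hord n.
by case: (tot e f hr ne) => h; [move: (he f) | move: (hf e)]; rewrite h.
Qed.

Lemma min_uniq n (e f : E B n) : minimal ord e -> minimal ord f -> rng e = rng f -> e = f.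
Proof.
move=> he hf hr; case: (eqVneq e f) => // /eqP ne.
have [_ [_ [_ tot]]] := Hord n.
by case: (tot e f hr ne) => h; [move: (hf e) | move: (he f)]; rewrite h.
Qed.

Lemma succ_uniq n (e f f' : E B n) : succ_edge ord e f -> succ_edge ord e f' -> f = f'.
Proof.
move=> [h1 h2] [h1' h2']; case: (eqVneq f f') => // /eqP ne.
have [hr [_ [_ tot]]] := Hord n.
have r : rng f = rng f' by rewrite -(hr _ _ h1) (hr _ _ h1').
case: (tot f f' r ne) => h; exfalso; [apply: (h2' f) | apply: (h2 f')]; by split.
Qed.

Lemma pred_uniq n (e e' f : E B n) : succ_edge ord e f -> succ_edge ord e' f -> e = e'.
Proof.
move=> [h1 h2] [h1' h2']; case: (eqVneq e e') => // /eqP ne.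
have [hr [_ [_ tot]]] := Hord n.
have r : rng e = rng e' by rewrite (hr _ _ h1) (hr _ _ h1').
case: (tot e e' r ne) => h; exfalso; [apply: (h2 e') | apply: (h2' e)]; by split.
Qed.

Lemma succ_not_min n (e f : E B n) : succ_edge ord e f -> ~ minimal ord f.
Proof. by move=> [h _] hm; move: (hm e); rewrite h. Qed.

Lemma agree_down (Q : forall n, E B n -> Prop)
  (Qu : forall n (e f : E B n), Q n e -> Q n f -> rng e = rng f -> e = f)
  (x y : bpath B) j : pv x j = pv y j ->
  (forall i, (i < j)%N -> Q i (pv x i) /\ Q i (pv y i)) ->
  forall i, (i <= j)%N -> pv x i = pv y i.
Proof.
move=> hj hQ.
suff H : forall d, (d <= j)%N -> pv x (j - d) = pv y (j - d).
  by move=> i hi; have := H (j - i)%N (leq_subr _ _); rewrite subKn.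
elim=> [|d IH] hd; first by rewrite subn0.
have e : (j - d.+1).+1 = (j - d)%N by rewrite subnSK.
have := IH (ltnW hd); rewrite -e => h.
have hlt : (j - d.+1 < j)%N by lia.
have [q1 q2] := hQ _ hlt.
apply: Qu q1 q2 _; by rewrite !pvP h.
Qed.

Lemma first_nonmax (x : bpath B) : ~ is_max_path ord x ->
  exists j, ~ maximal ord (pv x j) /\ forall i, (i < j)%N -> maximal ord (pv x i).
Proof.
move=> hx.
pose P := [pred n | ~~ [forall f, ~~ ord n (pv x n) f]].
have exP : exists n, P n.
  apply: NNPP => H; apply: hx => n.
  case: (boolP [forall f, ~~ ord n (pv x n) f]) => [/forallP //|hb].
  by exfalso; apply: H; exists n.
case: (ex_minnP exP) => j hj hmin; exists j; split.
  move=> hm; move: hj; rewrite /P inE => /negP; apply; exact/forallP.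
move=> i hij.
case: (boolP [forall f, ~~ ord i (pv x i) f]) => [/forallP //| hn].
by have := hmin i hn; rewrite leqNgt hij.
Qed.

Variables T Tinv : bpath B -> bpath B.
Hypothesis HV : vershik ord T.
Hypothesis TK : cancel T Tinv.
Hypothesis TinvK : cancel Tinv T.

Lemma T_firstmin K x : (forall i, (i < K)%N -> maximal ord (pv x i)) ->
  forall i, (i < K)%N -> minimal ord (pv (T x) i).
Proof.
move=> hK i hi; case: (classic (is_max_path ord x)) => hx.
  exact: (proj1 (HV x) hx).
have [j [hj1 hj2]] := first_nonmax _ hx.
have [_ [h2 _]] := proj2 (HV x) j hj1 hj2.
apply: h2; case: (ltnP i j) => // hji.
by exfalso; apply: hj1; apply: hK; exact: leq_ltn_trans hji hi.
Qed.

Lemma Tinv_firstmax K y : (forall i, (i < K)%N -> minimal ord (pv y i)) ->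
  forall i, (i < K)%N -> maximal ord (pv (Tinv y) i).
Proof.
move=> hK i hi; case: (classic (is_max_path ord (Tinv y))) => hx; first exact: hx.
have [j [hj1 hj2]] := first_nonmax _ hx.
have [h1 _] := proj2 (HV (Tinv y)) j hj1 hj2.
rewrite TinvK in h1.
apply: hj2; case: (ltnP i j) => // hji.
by exfalso; apply: (succ_not_min _ _ _ h1); apply: hK; exact: leq_ltn_trans hji hi.
Qed.

Hypothesis Hprop : properly_ordered ord.

Lemma T_cont x k : exists K, forall x', cyl_near K x x' -> cyl_near k (T x) (T x').
Proof.
case: (classic (is_max_path ord x)) => hx.
  have [_ [_ [xmin [hmin umin]]]] := Hprop.
  have [Kc hc] := @conv B (fun n e => minimal ord e) xmin (fun y hy => esym (umin y hy)) k.
  exists Kc => x' hx'.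
  apply: (@cyl_trans _ _ _ xmin); first apply: hc => i _; first exact: (proj1 (HV x) hx).
  apply: cyl_sym; apply: hc; apply: T_firstmin => i hi.
  by rewrite -hx'.
have [j [hj1 hj2]] := first_nonmax _ hx.
exists (maxn k j.+1) => x' hx'.
have ej : forall i, (i <= j)%N -> pv x' i = pv x i.
  by move=> i hi; rewrite hx' // leq_max ltnS hi orbT.
have hj1' : ~ maximal ord (pv x' j) by rewrite ej.
have hj2' : forall i, (i < j)%N -> maximal ord (pv x' i) by move=> i hi; rewrite ej ?(ltnW hi) //; apply: hj2.
have [s1 [m1 e1]] := proj2 (HV x) j hj1 hj2.
have [s2 [m2 e2]] := proj2 (HV x') j hj1' hj2'.
rewrite ej // in s2.
have tj := succ_uniq _ _ _ _ s1 s2.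
have ag := @agree_down (fun n e => minimal ord e) (@min_uniq) (T x) (T x') j tj
  (fun i hi => conj (m1 i hi) (m2 i hi)).
move=> i hi; case: (leqP i j) => hij; first exact: ag.
rewrite e1 // e2 // hx' //; by rewrite leq_max hi.
Qed.

Lemma Tinv_cont y k : exists K, forall y', cyl_near K y y' -> cyl_near k (Tinv y) (Tinv y').
Proof.
case: (classic (is_max_path ord (Tinv y))) => hx.
  have [_ [[xmax [hmax umax]] _]] := Hprop.
  have [Kc hc] := @conv B (fun n e => maximal ord e) xmax (fun y hy => esym (umax y hy)) k.
  exists Kc => y' hy'.
  apply: (@cyl_trans _ _ _ xmax); first apply: hc => i _; first exact: hx.
  apply: cyl_sym; apply: hc; apply: Tinv_firstmax => i hi.
  rewrite -hy' //; have := proj1 (HV (Tinv y)) hx; rewrite TinvK; by apply.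
have [j [hj1 hj2]] := first_nonmax _ hx.
have [s1 [m1 e1]] := proj2 (HV (Tinv y)) j hj1 hj2.
rewrite TinvK in s1 m1 e1.
exists (maxn k j.+1) => y' hy'.
have ej : forall i, (i <= j)%N -> pv y' i = pv y i.
  by move=> i hi; rewrite hy' // leq_max ltnS hi orbT.
have hx' : ~ is_max_path ord (Tinv y').
  move=> hm; have := proj1 (HV (Tinv y')) hm j; rewrite TinvK ej //.
  exact: succ_not_min _ _ _ s1.
have [j' [hj1' hj2']] := first_nonmax _ hx'.
have [s2 [m2 e2]] := proj2 (HV (Tinv y')) j' hj1' hj2'.
rewrite TinvK in s2 m2 e2.
have ejj : j' = j.
  case: (ltngtP j' j) => // h.
    exfalso; apply: (succ_not_min _ _ _ s2); rewrite ej ?(ltnW h) //; exact: m1.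
  exfalso; apply: (succ_not_min _ _ _ s1); rewrite -ej //; exact: m2.
subst j'.
rewrite ej // in s2.
have tj := pred_uniq _ _ _ _ s1 s2.
have ag := @agree_down (fun n e => maximal ord e) (@max_uniq) (Tinv y) (Tinv y') j tj
  (fun i hi => conj (hj2 i hi) (hj2' i hi)).
move=> i hi; case: (leqP i j) => hij; first exact: ag.
rewrite -e1 // -e2 // hy' //; by rewrite leq_max hi.
Qed.
End Ord.

Lemma iter_conj (A A' : Type) (Phi : A -> A') (f : A -> A) (F : A' -> A')
  (hf : forall x, Phi (f x) = F (Phi x)) m x : Phi (iter m f x) = iter m F (Phi x).
Proof. elim: m => //= m IH; by rewrite hf IH. Qed.

Lemma iterz_conj (A A' : Type) (Phi : A -> A') (f g : A -> A) (F G : A' -> A')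
  (hf : forall x, Phi (f x) = F (Phi x)) (hg : forall x, Phi (g x) = G (Phi x)) z x :
  Phi (iterz f g z x) = iterz F G z (Phi x).
Proof. by rewrite /iterz; case: z => m; rewrite (@iter_conj _ _ _ _ _ hf, @iter_conj _ _ _ _ _ hg). Qed.

Lemma iterz_f (A : Type) (f g : A -> A) (fK : cancel f g) z x :
  iterz f g z (f x) = iterz f g (z + 1)%R x.
Proof.
case: z => [m|[|m]].
  have -> : (Posz m + 1 = Posz m.+1)%R by lia.
  by rewrite /iterz iterSr.
  have -> : (Negz 0 + 1 = 0)%R by [].
  by rewrite /iterz /= fK.
have -> : (Negz m.+1 + 1 = Negz m)%R by rewrite !NegzE; lia.
by rewrite /iterz iterSr fK.
Qed.

Lemma Ycode_T (B : bratteli) (T Tinv : bpath B -> bpath B) (TK : cancel T Tinv) k x :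
  Ycode T Tinv k (T x) = shiftL (Ycode T Tinv k x).
Proof.
apply: functional_extensionality => z; by rewrite /Ycode /shiftL iterz_f.
Qed.

Lemma Ycode_Tinv (B : bratteli) (T Tinv : bpath B -> bpath B) (TK : cancel T Tinv)
  (TinvK : cancel Tinv T) k x :
  Ycode T Tinv k (Tinv x) = shiftR (Ycode T Tinv k x).
Proof.
rewrite -{2}(TinvK x) Ycode_T //.
apply: functional_extensionality => z; by rewrite /shiftR /shiftL subrK.
Qed.

Definition contb (B : bratteli) (f : bpath B -> bpath B) :=
  forall x k, exists K, forall x', cyl_near K x x' -> cyl_near k (f x) (f x').
Arguments contb {B} f.

Lemma cont_iter (B : bratteli) (f : bpath B -> bpath B) m : contb f -> contb (iter m f).
Proof.
move=> hf; elim: m => [|m IH] x k /=; first by exists k.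
have [K1 h1] := hf (iter m f x) k.
have [K2 h2] := IH x K1.
exists K2 => x' hx'; exact: h1 (h2 _ hx').
Qed.

Lemma cont_iterz (B : bratteli) (f g : bpath B -> bpath B) z :
  contb f -> contb g -> contb (iterz f g z).
Proof. case: z => m /= hf hg; exact: cont_iter. Qed.

Lemma cont_finite (B : bratteli) (f g : bpath B -> bpath B) (hf : contb f) (hg : contb g) x k N :
  exists K, forall x', cyl_near K x x' ->
    forall z : int, (absz z <= N)%N -> cyl_near k (iterz f g z x) (iterz f g z x').
Proof.
elim: N => [|N [K0 IH]].
  have [K h] := cont_iterz B f g (Posz 0) hf hg x k.
  exists K => x' hx' [[|m]|m] //= _; exact: h.
have [Kp hp] := cont_iterz B f g (Posz N.+1) hf hg x k.
have [Kn hn] := cont_iterz B f g (Negz N) hf hg x k.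
exists (maxn K0 (maxn Kp Kn)) => x' hx' z hz.
have c0 : cyl_near K0 x x' by apply: cyl_mono hx'; rewrite leq_maxl.
have cp : cyl_near Kp x x' by apply: cyl_mono hx'; rewrite (leq_trans (leq_maxl Kp Kn)) ?leq_maxr.
have cn : cyl_near Kn x x' by apply: cyl_mono hx'; rewrite (leq_trans (leq_maxr Kp Kn)) ?leq_maxr.
case: z hz => m /= hm.
  case: (leqP m N) => h; first by apply: (IH _ c0 (Posz m)).
  have -> : m = N.+1 by apply/eqP; rewrite eqn_leq hm h.
  exact: hp.
case: (leqP m.+1 N) => h; first by apply: (IH _ c0 (Negz m)).
have -> : m = N by apply/eqP; rewrite eqn_leq -ltnS hm -ltnS h.
exact: hn.
Qed.

Theorem mainTheorem20 (B : bratteli) (ord : forall n, rel (E B n))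
  (T Tinv : bpath B -> bpath B) :
  is_bratteli B -> is_ordering ord -> properly_ordered ord ->
  vershik ord T -> cancel T Tinv -> cancel Tinv T ->
  (weakly_mixing (fun _ : bpath B => True) (@cyl_near B) T Tinv <->
   forall k : nat, (1 <= k)%N ->
     weakly_mixing (inY T Tinv k) (@seq_near B) (@shiftL B) (@shiftR B)).
Proof.
move=> _ Hord Hprop HV TK TinvK.
have conj_it : forall k n x, Ycode T Tinv k (iterz T Tinv n x) =
    iterz (@shiftL B) (@shiftR B) n (Ycode T Tinv k x).
  move=> k n x; apply: iterz_conj; [exact: Ycode_T | exact: Ycode_Tinv].
split.
- move=> WX k _ W1 W2 [o1 O1] [o2 O2] [p1 hp1] [p2 hp2].
  have hcT : contb T by move=> x k'; exact: (@T_cont B ord Hord T HV Hprop x k').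
  have hcTi : contb Tinv by move=> x k'; exact: (@Tinv_cont B ord Hord T Tinv HV TinvK Hprop x k').
  have Phic : forall x N, exists K, forall x', cyl_near K x x' ->
      seq_near N (Ycode T Tinv k x) (Ycode T Tinv k x').
    move=> x N; have [K h] := @cont_finite B T Tinv hcT hcTi x k N.
    exists K => x' hx' z hz; rewrite /Ycode; apply: cyl_pik; exact: h.
  pose U (W : (int -> sym B) * (int -> sym B) -> Prop) (p : bpath B * bpath B) :=
    W (Ycode T Tinv k p.1, Ycode T Tinv k p.2).
  have Uopen : forall W, prod_open (inY T Tinv k) (@seq_near B) W ->
      prod_open (fun _ : bpath B => True) (@cyl_near B) (U W).
    move=> W [_ OW]; split => // p hp.
    have [N1 [N2 hN]] := OW _ hp.
    have [K1 h1] := Phic p.1 N1; have [K2 h2] := Phic p.2 N2.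
    exists K1, K2 => q _ _ q1 q2; apply: hN => /=.
    + by exists q.1.
    + by exists q.2.
    + exact: h1.
    + exact: h2.
  have Une : forall W, (forall p, W p -> inY T Tinv k p.1 /\ inY T Tinv k p.2) ->
      (exists p, W p) -> exists p, U W p.
    move=> W hW [p hp]; have [[x1 e1] [x2 e2]] := hW p hp.
    exists (x1, x2); rewrite /U /= -e1 -e2; by case: p hp {e1 e2}.
  have [n [p [h1 h2]]] := WX _ _ (Uopen _ (conj o1 O1)) (Uopen _ (conj o2 O2))
    (Une _ o1 (ex_intro _ p1 hp1)) (Une _ o2 (ex_intro _ p2 hp2)).
  exists n, (Ycode T Tinv k p.1, Ycode T Tinv k p.2); split => //=.
  by rewrite -!conj_it.
- move=> HY W1 W2 [_ O1] [_ O2] [p1 hp1] [p2 hp2].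
  have [k1 [k2 h1]] := O1 _ hp1; have [k3 [k4 h2]] := O2 _ hp2.
  pose k := maxn 1 (maxn (maxn k1 k2) (maxn k3 k4)).
  have hk1 : (1 <= k)%N by rewrite leq_maxl.
  have le : forall a, (a <= maxn (maxn k1 k2) (maxn k3 k4))%N -> (a <= k)%N.
    by move=> a ha; apply: leq_trans ha (leq_maxr _ _).
  have lk1 : (k1 <= k)%N by apply: le; rewrite !leq_max leqnn.
  have lk2 : (k2 <= k)%N by apply: le; rewrite !leq_max leqnn !orbT.
  have lk3 : (k3 <= k)%N by apply: le; rewrite !leq_max leqnn !orbT.
  have lk4 : (k4 <= k)%N by apply: le; rewrite !leq_max leqnn !orbT.
  pose V (p : bpath B * bpath B) (w : (int -> sym B) * (int -> sym B)) :=
    [/\ inY T Tinv k w.1, inY T Tinv k w.2, w.1 0%R = pik k p.1 & w.2 0%R = pik k p.2].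
  have Vopen : forall p, prod_open (inY T Tinv k) (@seq_near B) (V p).
    move=> p; split; first by move=> w [].
    move=> w [a b c d]; exists 0%N, 0%N => q q1 q2 n1 n2; split => //.
    + by rewrite -n1.
    + by rewrite -n2.
  have Vne : forall p, exists w, V p w.
    move=> p; exists (Ycode T Tinv k p.1, Ycode T Tinv k p.2); split => //.
    + by exists p.1.
    + by exists p.2.
  have [n [w [[[x ex] [y ey] c1 d1] [_ _ c2 d2]]]] := HY k hk1 _ _ (Vopen p1) (Vopen p2) (Vne p1) (Vne p2).
  rewrite ex ey -!conj_it in c2 d2; rewrite ex ey in c1 d1.
  exists n, (x, y); split.
  + apply: h1 => //=.
    * apply: (@cyl_mono B _ _ _ _ lk1); apply: cyl_sym; exact: (@pik_cyl B _ _ _ c1).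
    * apply: (@cyl_mono B _ _ _ _ lk2); apply: cyl_sym; exact: (@pik_cyl B _ _ _ d1).
  + apply: h2 => //=.
    * apply: (@cyl_mono B _ _ _ _ lk3); apply: cyl_sym; exact: (@pik_cyl B _ _ _ c2).
    * apply: (@cyl_mono B _ _ _ _ lk4); apply: cyl_sym; exact: (@pik_cyl B _ _ _ d2).
Qed.
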